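(* Let $K$ be a commutative unital ring, $G$ a finite groupoid, and $A=\bigoplus_{g\in G}A_g$ a unital $G$-graded $K$-algebra. Let $B=A\#KG^*$. For $g\in G$ put $$E_g=\bigoplus_{l,k\in G,\ d(k)=r(g)}A_l\#v_k\subseteq B,$$ and define $\beta_g:E_{g^{-1}}\to E_g$ by $\beta_g(a_l\#v_k)=a_l\#v_{kg^{-1}}$ for $a_l\in A_l$. Then $\beta=(\{E_g\}_{g\in G},\{\beta_g\}_{g\in G})$ is an action of $G$ on $B$, and $B=\bigoplus_{e\in G_0}E_e$.
   Context: A groupoid is a small category in which every morphism is invertible; we regard it as the set $G$ of its morphisms with the partial multiplication given by composition. For $g\in G$, $d(g)=g^{-1}g$ and $r(g)=gg^{-1}$ are its domain and range identities. The product $gh$ is defined iff $d(g)=r(h)$, and then $d(gh)=d(h)$, $r(gh)=r(g)$. $G^2=\{(g,h): d(g)=r(h)\}$, and $G_0$ is the set of identities. An action of $G$ on a ring $R$ is a pair $\beta=(\{E_g\}_{g\in G},\{\beta_g\}_{g\in G})$ such that: - each $E_g$ is an ideal of $R$ with $E_g=E_{r(g)}$; - each $\beta_g:E_{g^{-1}}\to E_g$ is a ring isomorphism; - $\beta_e=\mathrm{id}_{E_e}$ for $e\in G_0$; - $\beta_g\beta_h(x)=\beta_{gh}(x)$ for all $(g,h)\in G^2$ and $x\in E_{h^{-1}}$. A $G$-graded $K$-algebra is $A=\bigoplus_{g\in G}A_g$ (a direct sum of $K$-submodules) with $A_gA_h\subseteq A_{gh}$ if $(g,h)\in G^2$ and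 $A_gA_h=0$ otherwise. $KG^*$ is the free $K$-module with basis $\{v_g\}_{g\in G}$ and multiplication $v_gv_h=\delta_{g,h}v_g$, with identity $\sum_g v_g$. It acts on $A$ by $v_h\cdot a=a_h$, the $h$-component of $a$. The weak smash product $A\#KG^*$ is $A\otimes_K KG^*$, with $a\#v_g:=a\otimes v_g$. Its multiplication is $(a\#v_g)(b\#v_h)=a(v_{gh^{-1}}\cdot b)\#v_h$ if $d(g)=d(h)$, and $0$ otherwise. *)

(* Defs.v *)
From HB Require Import structures.
From mathcomp Require Import all_boot all_order all_algebra.
Set Implicit Arguments. Unset Strict Implicit. Unset Printing Implicit Defensive.
Import GRing.Theory.
Local Open Scope ring_scope.

(* gd g = g^-1 g (domain), gr g = g g^-1 (range); gmul g h is the product,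
   meaningful only when gd g = gr h (its value elsewhere is irrelevant). *)
Record groupoid := Groupoid {
  gcar :> finType;
  gmul : gcar -> gcar -> gcar;
  ginv : gcar -> gcar;
  gd : gcar -> gcar;
  gr : gcar -> gcar;
  gd_def : forall g, gd g = gmul (ginv g) g;
  gr_def : forall g, gr g = gmul g (ginv g);
  gd_inv : forall g, gd (ginv g) = gr g;
  gr_inv : forall g, gr (ginv g) = gd g;
  gd_mul : forall g h, gd g = gr h -> gd (gmul g h) = gd h;
  gr_mul : forall g h, gd g = gr h -> gr (gmul g h) = gr g;
  gmulA : forall g h k, gd g = gr h -> gd h = gr k ->
            gmul (gmul g h) k = gmul g (gmul h k);
  gr_d : forall g, gr (gd g) = gd g;
  gd_r : forall g, gd (gr g) = gr g;
  gmul_d : forall g, gmul g (gd g) = g;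
  gmul_r : forall g, gmul (gr g) g = g
}.

Definition gid (G : groupoid) (e : G) : bool := e \in codom (@gd G).

(* Ag g : the homogeneous component A_g (a predicate on A);
   comp h a : the h-component a_h of a (= v_h . a). *)
Definition graded_alg (K : comRingType) (G : groupoid) (A : algType K)
    (Ag : G -> A -> Prop) (comp : G -> A -> A) : Prop :=
  (forall g, Ag g 0) /\
  (forall g x y, Ag g x -> Ag g y -> Ag g (x + y)) /\
  (forall g (c : K) x, Ag g x -> Ag g (c *: x)) /\
  (forall h a, Ag h (comp h a)) /\
  (forall a, a = \sum_(h : G) comp h a) /\
  (forall f : G -> A, (forall g, Ag g (f g)) -> \sum_(g : G) f g = 0 ->
      forall g, f g = 0) /\
  (forall g h x y, Ag g x -> Ag h y -> gd g = gr h -> Ag (gmul g h) (x * y)) /\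
  (forall g h x y, Ag g x -> Ag h y -> gd g <> gr h -> x * y = 0).

(* Since KG^* is free on {v_g}, A (x)_K KG^* is identified with {ffun G -> A}:
   F corresponds to \sum_g F g # v_g. *)
Definition smash (K : comRingType) (G : groupoid) (A : algType K) :=
  {ffun G -> A}.

Definition tens (K : comRingType) (G : groupoid) (A : algType K) (a : A) (k : G)
  : smash G A := [ffun j => if j == k then a else 0].

(* (a # v_g)(b # v_h) = a (v_{g h^-1} . b) # v_h if d g = d h, 0 otherwise,
   extended bilinearly. *)
Definition smash_mul (K : comRingType) (G : groupoid) (A : algType K)
    (comp : G -> A -> A) (F1 F2 : smash G A) : smash G A :=
  [ffun h => \sum_(g : G | gd g == gd h) F1 g * comp (gmul g (ginv h)) (F2 h)].

Definition Eg (K : comRingType) (G : groupoid) (A : algType K)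
    (Ag : G -> A -> Prop) (g : G) (F : smash G A) : Prop :=
  exists c : G -> G -> A,
    (forall l k, Ag l (c l k)) /\
    (forall l k, gd k <> gr g -> c l k = 0) /\
    F = \sum_(l : G) \sum_(k : G) tens (c l k) k.

(* beta_g (a_l # v_k) = a_l # v_{k g^-1}, extended additively on E_{g^-1}
   (elements of E_{g^-1} are supported on k with d k = d g). *)
Definition beta (K : comRingType) (G : groupoid) (A : algType K)
    (g : G) (F : smash G A) : smash G A :=
  \sum_(k : G | gd k == gd g) tens (F k) (gmul k (ginv g)).

Definition is_ideal (R : zmodType) (mul : R -> R -> R) (I : R -> Prop) : Prop :=
  I 0 /\ (forall x y, I x -> I y -> I (x - y)) /\
  (forall b x, I x -> I (mul b x) /\ I (mul x b)).

Definition ring_iso_on (R : zmodType) (mul : R -> R -> R) (P Q : R -> Prop)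
    (f : R -> R) : Prop :=
  (forall x, P x -> Q (f x)) /\
  (forall x y, P x -> P y -> f x = f y -> x = y) /\
  (forall y, Q y -> exists2 x, P x & f x = y) /\
  (forall x y, P x -> P y -> f (x + y) = f x + f y) /\
  (forall x y, P x -> P y -> f (mul x y) = mul (f x) (f y)).

Definition groupoid_action (G : groupoid) (R : zmodType) (mul : R -> R -> R)
    (E : G -> R -> Prop) (b : G -> R -> R) : Prop :=
  (forall g, is_ideal mul (E g)) /\
  (forall g x, E g x <-> E (gr g) x) /\
  (forall g, ring_iso_on mul (E (ginv g)) (E g) (b g)) /\
  (forall e, gid e -> forall x, E e x -> b e x = x) /\
  (forall g h, gd g = gr h -> forall x, E (ginv h) x ->
      b g (b h x) = b (gmul g h) x).

Definition internal_direct_sum (G : groupoid) (R : zmodType) (P : pred G)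
    (E : G -> R -> Prop) : Prop :=
  (forall x, exists2 f : G -> R, (forall e, P e -> E e (f e)) &
       x = \sum_(e | P e) f e) /\
  (forall f : G -> R, (forall e, P e -> E e (f e)) ->
       \sum_(e | P e) f e = 0 -> forall e, P e -> f e = 0).

(* Main.v *)
Require Import Defs.
From HB Require Import structures.
From mathcomp Require Import all_boot all_order all_algebra.
Set Implicit Arguments. Unset Strict Implicit. Unset Printing Implicit Defensive.
Import GRing.Theory.
Local Open Scope ring_scope.

Section Aux.
Variable G : groupoid.
Implicit Types g h j k : G.

Lemma gr_gr g : gr (gr g) = gr g.
Proof. by rewrite -(gd_inv g) gr_d. Qed.

Lemma gd_gd g : gd (gd g) = gd g.
Proof. by rewrite -(gr_inv g) gd_r. Qed.

Lemma gd_mulinv k g : gd k = gd g -> gd (gmul k (ginv g)) = gr g.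
Proof. by move=> H; rewrite gd_mul ?gd_inv // gr_inv. Qed.

Lemma mulinvK k g : gd k = gd g -> gmul (gmul k (ginv g)) g = k.
Proof.
move=> H; rewrite gmulA ?gr_inv ?gd_inv // -gd_def -H gmul_d //.
Qed.

Lemma mulK j g : gd j = gr g -> gmul (gmul j g) (ginv g) = j.
Proof.
move=> H; rewrite gmulA ?gr_inv ?gd_inv // -gr_def -H gmul_d //.
Qed.

Lemma ginv_mul j g : gd j = gr g ->
  ginv (gmul j g) = gmul (ginv g) (ginv j).
Proof.
move=> H.
set m := gmul j g; set n := gmul (ginv g) (ginv j).
have Hgn : gr n = gd g.
  rewrite /n gr_mul; first by rewrite gr_inv.
  by rewrite gd_inv gr_inv H.
have Hdm : gd m = gd g by rewrite /m gd_mul.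
have Hrm : gr m = gr j by rewrite /m gr_mul.
have Hmn : gmul m n = gr m.
  rewrite /m gmulA //.
  rewrite /n -(@gmulA _ g (ginv g) (ginv j)); first last.
  - by rewrite gd_inv gr_inv H.
  - by rewrite gr_inv.
  by rewrite -gr_def -H -(gr_inv j) gmul_r -gr_def gr_mul.
have -> : ginv m = gmul (ginv m) (gr m) by rewrite -gd_inv gmul_d.
rewrite -Hmn -gmulA ?gr_inv ?gd_inv //; last by rewrite Hdm Hgn.
by rewrite -gd_def Hdm -Hgn gmul_r.
Qed.

End Aux.

Section Main.
Variables (K : comRingType) (G : groupoid) (A : algType K)
    (Ag : G -> A -> Prop) (comp : G -> A -> A).
Hypothesis HA : graded_alg Ag comp.

Lemma comp0 h : comp h 0 = 0.
Proof.
case: HA => H0 [HD [HZ [Hc [Hsum [Huniq _]]]]].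
by apply: (Huniq (fun h => comp h 0)) => //; rewrite -Hsum.
Qed.

Lemma EgP g (F : smash G A) :
  Eg Ag g F <-> (forall k, gd k != gr g -> F k = 0).
Proof.
case: HA => H0 [HD [HZ [Hc [Hsum _]]]].
have tensE (c : G -> G -> A) j :
   (\sum_(l : G) \sum_(k : G) tens (c l k) k) j = \sum_l c l j.
  rewrite sum_ffunE; apply: eq_bigr => l _; rewrite sum_ffunE.
  rewrite (bigD1 j) //= ffunE eqxx big1 ?addr0 // => k /negbTE Hk.
  by rewrite ffunE eq_sym Hk.
split.
  case=> c [Hc1 [Hc2 ->]] k /eqP Hk; rewrite tensE big1 // => l _.
  exact: Hc2.
move=> HF; exists (fun l k => if gd k == gr g then comp l (F k) else 0).
split; first by move=> l k; case: ifP.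
split; first by move=> l k /eqP/negbTE ->.
apply/ffunP => j; rewrite tensE.
case: (boolP (gd j == gr g)) => Hj; last by rewrite (HF j) // big1 // => l _; rewrite (negbTE Hj).
rewrite (eq_bigr (fun l => comp l (F j))) -?Hsum // => l _; by rewrite Hj.
Qed.

Lemma betaE g (F : smash G A) j :
  beta g F j = if gd j == gr g then F (gmul j g) else 0.
Proof.
rewrite /beta sum_ffunE.
case: ifP => Hj.
  have Hjg : gd (gmul j g) == gd g by rewrite gd_mul ?(eqP Hj).
  rewrite (bigD1 (gmul j g)) //= ffunE mulK ?(eqP Hj) // eqxx big1 ?addr0 //.
  move=> k /andP [/eqP Hk Hne]; rewrite ffunE; case: eqP => // Hjk.
  by move: Hne; rewrite Hjk mulinvK // eqxx.
rewrite big1 // => k /eqP Hk; rewrite ffunE; case: eqP => // Hjk.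
by move: Hj; rewrite Hjk gd_mulinv // eqxx.
Qed.

Lemma gid_eq (e : G) : gid e -> gr e = e /\ gd e = e.
Proof. by case/codomP => m ->; rewrite gr_d gd_gd. Qed.

Theorem proposition2p4' :
  groupoid_action (smash_mul comp) (Eg Ag) (@beta K G A) /\
  internal_direct_sum (@gid G) (Eg Ag).
Proof.
split.
  split.
    move=> g; split; first by apply/EgP => k _; rewrite ffunE.
    split.
      move=> x y /EgP Hx /EgP Hy; apply/EgP => k Hk.
      by rewrite !ffunE Hx // Hy // subr0.
    move=> b x /EgP Hx; split; apply/EgP => k Hk; rewrite ffunE.
      by rewrite big1 // => l _; rewrite Hx // comp0 mulr0.
    rewrite big1 // => l /eqP Hl; rewrite Hx ?mul0r // Hl //.
  split.
    move=> g x; split=> /EgP H; apply/EgP => k Hk; apply: H; by rewrite ?gr_gr in Hk *.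
  split.
    move=> g.
    have EinvP (x : smash G A) :
        Eg Ag (ginv g) x <-> (forall k, gd k != gd g -> x k = 0).
      split=> [/EgP H k Hk|H]; [apply: H; by rewrite gr_inv | apply/EgP => k; rewrite gr_inv; exact: H].
    split.
      move=> x _; apply/EgP => j /negbTE Hj; by rewrite betaE Hj.
    split.
      move=> x y /EinvP Hx /EinvP Hy Hb; apply/ffunP => k.
      case: (eqVneq (gd k) (gd g)) => Hk; last by rewrite Hx // Hy.
      move/ffunP: Hb => /(_ (gmul k (ginv g))).
      by rewrite !betaE gd_mulinv // eqxx mulinvK.
    split.
      move=> y /EgP Hy.
      exists [ffun k => if gd k == gd g then y (gmul k (ginv g)) else 0].
        by apply/EinvP => k /negbTE Hk; rewrite ffunE Hk.
      apply/ffunP => j; rewrite betaE.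
      case: (eqVneq (gd j) (gr g)) => Hj; last by rewrite Hy.
      by rewrite ffunE gd_mul ?Hj // eqxx mulK.
    split.
      by move=> x y _ _; apply/ffunP => j; rewrite !(betaE, ffunE); case: ifP;
        rewrite ?addr0.
    move=> x y /EinvP Hx /EinvP Hy; apply/ffunP => j.
    rewrite betaE ffunE.
    case: (eqVneq (gd j) (gr g)) => Hj; last first.
      rewrite ffunE big1 // => h _; by rewrite (betaE g y) (negbTE Hj) comp0 mulr0.
    rewrite ffunE (betaE g y) Hj eqxx.
    have Hdjg : gd (gmul j g) = gd g by rewrite gd_mul.
    rewrite (reindex_onto (fun h => gmul h g) (fun h => gmul h (ginv g))) /=;
      last by move=> h /eqP; rewrite Hdjg => /mulinvK.
    apply: eq_big.
      move=> h; apply/idP/idP.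
        case/andP => /eqP H1 /eqP H2.
        by rewrite -H2 gd_mulinv // H1 Hdjg.
      move=> /eqP H; rewrite gd_mul ?H // Hdjg eqxx mulK ?H //=.
    move=> h /andP [/eqP H1 /eqP H2].
    have H : gd h = gr g by rewrite -H2 gd_mulinv // H1 Hdjg.
    rewrite betaE H eqxx; congr (_ * comp _ _).
    have Hgi : gd (ginv g) = gr (ginv j) by rewrite gd_inv gr_inv Hj.
    have Hr : gr (gmul (ginv g) (ginv j)) = gd g by rewrite gr_mul // gr_inv.
    rewrite ginv_mul // (gmulA (g:=h) (h:=g)) ?Hr //.
    rewrite -(@gmulA _ g (ginv g) (ginv j)) ?Hgi ?gr_inv //.
    by rewrite -gr_def -Hj -(gr_inv j) gmul_r.
  split.
    move=> e He x /EgP Hx; case: (gid_eq He) => Hr Hd.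
    apply/ffunP => j; rewrite betaE Hr.
    case: (eqVneq (gd j) e) => Hj; first by rewrite -Hj gmul_d.
    by rewrite Hx // Hr.
  move=> g h Hgh x _; apply/ffunP => j.
  rewrite !betaE gr_mul //.
  case: (eqVneq (gd j) (gr g)) => Hj //.
  by rewrite gd_mul ?Hj // Hgh eqxx gmulA.
split.
  move=> x; exists (fun e => [ffun k => if gd k == e then x k else 0]).
    move=> e He; apply/EgP => k; case: (gid_eq He) => -> _.
    by rewrite ffunE => /negbTE ->.
  apply/ffunP => k; rewrite sum_ffunE.
  rewrite (bigD1 (gd k)) /=; last exact: codom_f.
  rewrite ffunE eqxx big1 ?addr0 // => e /andP [_ He].
  by rewrite ffunE eq_sym (negbTE He).
move=> f Hf Hs e He; apply/ffunP => k; rewrite ffunE.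
case: (gid_eq He) => Hr _.
case: (eqVneq (gd k) e) => Hk; last by move/EgP: (Hf e He) => ->; rewrite ?Hr.
move/ffunP: Hs => /(_ k); rewrite sum_ffunE ffunE.
rewrite (bigD1 e) //= big1 ?addr0; first by move=> ->.
move=> e' /andP [He' Hne]; move/EgP: (Hf e' He') => -> //.
by case: (gid_eq He') => -> _; rewrite Hk eq_sym.
Qed.

End Main.

Theorem proposition2p4 (K : comRingType) (G : groupoid) (A : algType K)
    (Ag : G -> A -> Prop) (comp : G -> A -> A)
    (HA : graded_alg Ag comp) :
  groupoid_action (smash_mul comp) (Eg Ag) (@beta K G A) /\
  internal_direct_sum (@gid G) (Eg Ag).
Proof. exact: proposition2p4' HA. Qed.
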